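(* Let $(X,\|\cdot\|)$ and $(Y,\|\cdot\|)$ be finite-dimensional normed vector spaces and let $T$ be a $Y$-multivalued map on $X$ with $T(u)\neq\varnothing$ for every $u\in X$ which is weakly continuous at every point of $X$. Then $\{x\in X:T(x)\text{ is a singleton}\}$ and $\mathrm{dmn}\,\mathrm{D}T$ are Borel subsets of $X$, and $\mathrm{D}T:\mathrm{dmn}\,\mathrm{D}T\to\mathrm{Hom}(X,Y)$ is a Borel function.
   Context: A $Y$-multivalued map $T$ on $X$ assigns to each $x\in X$ a subset $T(x)\subseteq Y$; if $T(x)$ is a singleton, $T(x)$ also denotes its unique element. $T$ is weakly continuous at $x$ if for every $\varepsilon>0$ there is $\delta>0$ such that $T(y)\subseteq T(x)+\{v\in Y:\|v\|<\varepsilon\}$ whenever $\|y-x\|<\delta$. $T$ is strongly differentiable at $x$ if $T(x)$ is a singleton and there is a linear map $L:X\to Y$ such that for every $\varepsilon>0$ there is $\delta>0$ with $\|w-T(x)-L(y-x)\|\le\varepsilon\|y-x\|$ whenever $\|x-y\|\le\delta$ and $w\in T(y)$; such $L$ is unique and denoted $\mathrm{D}T(x)$, and $\mathrm{dmn}\,\mathrm{D}T$ is the set of points where $T$ is strongly differentiable. *)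

(* Defs.v *)
From HB Require Import structures.
From mathcomp Require Import all_boot all_order all_algebra.
From mathcomp Require Import all_classical all_reals all_analysis.
Set Implicit Arguments. Unset Strict Implicit. Unset Printing Implicit Defensive.
Import Order.TTheory GRing.Theory Num.Theory.
Import numFieldNormedType.Exports.
Local Open Scope classical_set_scope.
Local Open Scope ring_scope.

(* A (finite-dimensional, real) normed space is modelled as 'rV[R]_n equipped
   with an ARBITRARY norm N (not necessarily the library's sup norm). *)
Definition is_norm (R : realType) (n : nat) (N : 'rV[R]_n -> R) : Prop :=
  [/\ forall x y, N (x + y) <= N x + N y,
      forall (a : R) x, N (a *: x) = `|a| * N x
    & forall x, N x = 0 -> x = 0].

Definition weakly_continuous_at (R : realType) (n m : nat)
  (NX : 'rV[R]_n -> R) (NY : 'rV[R]_m -> R) (T : 'rV[R]_n -> set 'rV[R]_m)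
  (x : 'rV[R]_n) : Prop :=
  forall e : R, 0 < e -> exists2 d : R, 0 < d &
    forall y, NX (y - x) < d ->
      forall w, T y w -> exists t v, [/\ T x t, NY v < e & w = t + v].

(* Linear maps X -> Y are represented by matrices A : 'M_(n,m), acting by
   v |-> v *m A.  [strong_derivative_at NX NY T x A] says: T(x) is a singleton
   {y0} and A is a strong derivative of T at x. *)
Definition strong_derivative_at (R : realType) (n m : nat)
  (NX : 'rV[R]_n -> R) (NY : 'rV[R]_m -> R) (T : 'rV[R]_n -> set 'rV[R]_m)
  (x : 'rV[R]_n) (A : 'M[R]_(n, m)) : Prop :=
  exists y0, T x = [set y0] /\
    forall e : R, 0 < e -> exists2 d : R, 0 < d &
      forall y, NX (x - y) <= d ->
        forall w, T y w -> NY (w - y0 - (y - x) *m A) <= e * NX (y - x).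

Definition dmnD (R : realType) (n m : nat)
  (NX : 'rV[R]_n -> R) (NY : 'rV[R]_m -> R) (T : 'rV[R]_n -> set 'rV[R]_m) :
  set 'rV[R]_n :=
  [set x | exists A, strong_derivative_at NX NY T x A].

(* DT(x): the (unique) strong derivative at x when x ∈ dmn DT (0 otherwise). *)
Definition DT (R : realType) (n m : nat)
  (NX : 'rV[R]_n -> R) (NY : 'rV[R]_m -> R) (T : 'rV[R]_n -> set 'rV[R]_m)
  (x : 'rV[R]_n) : 'M[R]_(n, m) :=
  xget 0 [set A | strong_derivative_at NX NY T x A].

Definition Borel (S : topologicalType) (A : set S) : Prop := <<s open >> A.

Definition Borel_fun_on (S U : topologicalType) (D : set S) (f : S -> U) : Prop :=
  forall B : set U, Borel B -> Borel (D `&` f @^-1` B).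

(* Main.v *)
Require Import Defs.
From HB Require Import structures.
From mathcomp Require Import all_boot all_order all_algebra.
From mathcomp Require Import all_classical all_reals all_analysis.
From mathcomp Require Import ring lra.
Import Order.TTheory GRing.Theory Num.Theory.
Import numFieldNormedType.Exports.
Local Open Scope classical_set_scope.
Local Open Scope ring_scope.
Set Implicit Arguments. Unset Strict Implicit. Unset Printing Implicit Defensive.

Lemma small_inv (R : realType) (e : R) : 0 < e -> exists k : nat, k.+1%:R^-1 < e.
Proof.
move=> e0; have ei : 0 <= e^-1 by rewrite invr_ge0 ltW.
have := archi_boundP ei; set k := Num.bound _ => hk.
exists k; rewrite -(invrK e) ltf_pV2 ?posrE ?invr_gt0 //.
by apply: lt_trans hk _; rewrite ltr_nat.
Qed.

Lemma le0_inv (R : realType) (a : R) : (forall k : nat, a < k.+1%:R^-1) -> a <= 0.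
Proof.
move=> h; rewrite leNgt; apply/negP => a0.
have [k hk] := small_inv a0; by have := lt_trans (h k) hk; rewrite ltxx.
Qed.

Lemma rat_approx (R : realType) (a r : R) : 0 < r -> exists q : rat, `|a - ratr q| < r.
Proof.
move=> r0.
have [z [hz [q _ qz]]] := @dense_rat R (ball a r) (ex_intro _ a (ballxx a r0)) (ball_open a r).
exists q; rewrite qz; move: hz; by rewrite -ball_normE.
Qed.

Lemma entry_le_norm (R : realType) p q (M : 'M[R]_(p, q)) i j : `|M i j| <= `|M|.
Proof.
rewrite (_ : `|M| = mx_norm M) // mx_normrE.
exact: (le_bigmax _ (fun ij : 'I_p * 'I_q => `|M ij.1 ij.2|) (i, j)).
Qed.

Lemma norm_le_entries (R : realType) p q (M : 'M[R]_(p, q)) r :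
  0 <= r -> (forall i j, `|M i j| <= r) -> `|M| <= r.
Proof.
move=> r0 h; rewrite (_ : `|M| = mx_norm M) // mx_normrE.
by apply: bigmax_le => // -[i j] _; apply: h.
Qed.

Lemma mx_approx (R : realType) p q (A : 'M[R]_(p, q)) r :
  0 < r -> exists Q : 'M[rat]_(p, q), `|A - map_mx ratr Q| < r.
Proof.
move=> r0.
have h : forall ij : 'I_p * 'I_q, exists x : rat, `|A ij.1 ij.2 - ratr x| < r / 2.
  by move=> ij; apply: rat_approx; lra.
have [g hg] := choice h.
exists (\matrix_(i, j) g (i, j)).
apply: le_lt_trans (_ : r / 2 < r); last lra.
apply: norm_le_entries; first lra.
by move=> i j; rewrite !mxE; apply: ltW; exact: (hg (i, j)).
Qed.

Lemma mulmx_norm (R : realType) p q (v : 'rV[R]_p) (B : 'M[R]_(p, q)) :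
  `|v *m B| <= p%:R * (`|v| * `|B|).
Proof.
apply: norm_le_entries; first by rewrite mulr_ge0 // mulr_ge0.
move=> i j; rewrite !mxE.
apply: le_trans (ler_norm_sum _ _ _) _.
apply: le_trans (_ : \sum_(k < p) `|v| * `|B| <= _).
  apply: ler_sum => k _; rewrite normrM; apply: ler_pM => //; exact: entry_le_norm.
by rewrite sumr_const card_ord mulr_natl.
Qed.

Section BorelFacts.
Variable S : topologicalType.

Lemma B_open (A : set S) : open A -> Borel A.
Proof. by move=> oA; apply: sub_sigma_algebra. Qed.

Lemma B_set0 : Borel (@set0 S).
Proof. exact: sigma_algebra0. Qed.

Lemma B_C (A : set S) : Borel A -> Borel (~` A).
Proof. by move=> hA; rewrite -setTD; apply: sigma_algebraCD. Qed.

Lemma B_closed (A : set S) : closed A -> Borel A.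
Proof. by move=> cA; rewrite -(setCK A); apply: B_C; apply: B_open; exact: closed_openC. Qed.

Lemma B_bigcup (F : nat -> set S) : (forall k, Borel (F k)) -> Borel (\bigcup_k F k).
Proof. by move=> h; apply: sigma_algebra_bigcup. Qed.

Lemma B_bigcap (F : nat -> set S) : (forall k, Borel (F k)) -> Borel (\bigcap_k F k).
Proof.
move=> h; rewrite -(setCK (\bigcap_k F k)) setC_bigcap; apply: B_C; apply: B_bigcup => k.
exact: B_C.
Qed.

Lemma B_I (A B : set S) : Borel A -> Borel B -> Borel (A `&` B).
Proof.
move=> hA hB.
rewrite (_ : A `&` B = \bigcap_k (if k is 0 then A else B)).
  by apply: B_bigcap => -[|k].
apply/seteqP; split => x /=; first by move=> [Ax Bx] [|k].
by move=> h; split; [exact: (h 0%N) | exact: (h 1%N)].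
Qed.

Lemma B_countable (I : countType) (F : I -> set S) :
  (forall i, Borel (F i)) -> Borel (\bigcup_i F i).
Proof.
move=> h.
rewrite (_ : \bigcup_i F i = \bigcup_k (if unpickle k is Some i then F i else set0)).
  by apply: B_bigcup => k; case: (unpickle k) => [i|]; [exact: h | exact: B_set0].
apply/seteqP; split => x /=.
  by move=> [i _ Fx]; exists (pickle i) => //; rewrite pickleK.
by move=> [k _]; case: (unpickle k) => [i Fx|//]; exists i.
Qed.

End BorelFacts.

Section NormFacts.
Variables (R : realType) (n : nat) (N : 'rV[R]_n -> R).
Hypothesis hN : is_norm N.

Lemma N0 : N 0 = 0.
Proof.
case: hN => _ hZ _; by rewrite -(scale0r (0 : 'rV[R]_n)) hZ normr0 mul0r.
Qed.

Lemma NN x : N (- x) = N x.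
Proof.
case: hN => _ hZ _; by rewrite -scaleN1r hZ normrN normr1 mul1r.
Qed.

Lemma N_ge0 x : 0 <= N x.
Proof.
case: hN => hD _ _.
have := hD x (- x); rewrite subrr N0 NN -mulr2n => h.
by rewrite -(@pmulrn_lge0 _ _ 2).
Qed.

Lemma NB x y : N (x - y) = N (y - x).
Proof. by rewrite -NN opprB. Qed.

Lemma N_tri x y : N (x + y) <= N x + N y.
Proof. by case: hN => h _ _; apply: h. Qed.

Lemma NZ (a : R) x : N (a *: x) = `|a| * N x.
Proof. by case: hN => _ h _; apply: h. Qed.

Lemma N_sum k (f : 'I_k -> 'rV[R]_n) : N (\sum_i f i) <= \sum_i N (f i).
Proof.
apply: (big_ind2 (fun a b => N a <= b)); first by rewrite N0.
by move=> a1 b1 a2 b2 h1 h2; apply: le_trans (N_tri _ _) (lerD h1 h2).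
by move=> i _.
Qed.

Lemma N_eq0 x : N x = 0 -> x = 0.
Proof. by case: hN => _ _ h; apply: h. Qed.

End NormFacts.

Lemma near_norm (R : realType) p q (x : 'M[R]_(p, q)) (P : 'M[R]_(p, q) -> Prop) :
  (exists2 e, 0 < e & forall y, `|x - y| < e -> P y) -> \forall y \near x, P y.
Proof. by move=> [e e0 h]; apply/nbhs_normP; exists e => // y /=; apply: h. Qed.

Lemma open_norm (R : realType) p q (A : set 'M[R]_(p, q)) :
  (forall x, A x -> exists2 e, 0 < e & forall y, `|x - y| < e -> A y) -> open A.
Proof. by move=> h; rewrite openE => x /h /near_norm. Qed.

Section NormBounds.
Variables (R : realType) (n : nat) (N : 'rV[R]_n -> R).
Hypothesis hN : is_norm N.

Lemma N_upper : exists2 C, 0 < C & forall x, N x <= C * `|x|.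
Proof.
have s0 : 0 <= \sum_(j < n) N (delta_mx 0 j) by apply: sumr_ge0 => j _; exact: N_ge0.
exists (\sum_(j < n) N (delta_mx 0 j) + 1); first lra.
move=> x; rewrite {1}(row_sum_delta x); apply: le_trans (N_sum hN _) _.
apply: (@le_trans _ _ (\sum_j `|x| * N (delta_mx 0 j))).
  apply: ler_sum => j _; rewrite NZ //; apply: ler_wpM2r; [exact: N_ge0 | exact: entry_le_norm].
rewrite -mulr_sumr.
set s := \sum_(j < n) _; have := normr_ge0 x; nra.
Qed.

Lemma N_lip a b : `|N a - N b| <= N (a - b).
Proof.
have h1 := N_tri hN b (a - b); have h2 := N_tri hN a (b - a).
rewrite addrC subrK in h1; rewrite addrC subrK NB // in h2.
rewrite ler_norml; apply/andP; split; lra.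
Qed.

Lemma N_cont : continuous N.
Proof.
have [C C0 hC] := N_upper.
move=> x; apply/(@cvgrPdist_lt _ _ _ (nbhs x) (nbhs_filter x)) => e e0; apply: near_norm.
exists (e / C); first exact: divr_gt0.
move=> y hy; apply: le_lt_trans (N_lip _ _) _.
apply: le_lt_trans (hC _) _.
by rewrite -ltr_pdivlMl // mulrC.
Qed.

Lemma N_lower : exists2 c, 0 < c & forall x, c * `|x| <= N x.
Proof.
pose S := [set x : 'rV[R]_n | `|x| = 1].
have nS x : x != 0 -> S (`|x|^-1 *: x).
  move=> x0; rewrite /S /= normrZ normrV ?unitfE ?normr_eq0 // normr_id mulVf //.
  by rewrite normr_eq0.
have [[x0 Sx0]|S0] := pselect (S !=set0); last first.
  exists 1 => // x; have [->|/nS Sx] := eqVneq x 0; first by rewrite normr0 mulr0 N_ge0.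
  by exfalso; apply: S0; eexists; exact: Sx.
have cS : compact S.
  apply: bounded_closed_compact.
    rewrite /= /bounded_near; near=> M => y /= ->.
    near: M; apply: nbhs_pinfty_ge; exact: num_real.
  rewrite (_ : S = (fun x : 'rV[R]_n => `|x|) @^-1` [set y : R | y = 1]) //.
  apply: preimage_closed; last exact: closed_eq.
  by move=> y _; exact: norm_continuous.
have cN : {within S, continuous N} by apply: continuous_subspaceT; exact: N_cont.
have [c /set_mem Sc hc] := EVT_min_rV (ex_intro _ x0 Sx0) cS cN.
have c0 : c != 0 by apply/eqP => c0; move: Sc; rewrite /S /= c0 normr0 => /eqP; rewrite eq_sym oner_eq0.
exists (N c).
  rewrite lt_def N_ge0 // andbT; apply/eqP => /(N_eq0 hN) /eqP; exact/negP.
move=> x; have [->|x0'] := eqVneq x 0; first by rewrite normr0 mulr0 N_ge0.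
have := hc _ (mem_set (nS _ x0')); rewrite NZ // normrV ?unitfE ?normr_eq0 // normr_id.
by rewrite ler_pdivlMl ?normr_gt0 // mulrC.
Unshelve. all: by end_near.
Qed.

End NormBounds.

Lemma aux_lt (R : realType) (a dd : R) : 0 <= a -> 0 < dd -> dd / (2 * (a + 1)) * a < dd.
Proof.
move=> a0 d0; rewrite mulrAC ltr_pdivrMr; last lra.
nra.
Qed.

Lemma subsub (R : realType) k (a b1 b2 : 'rV[R]_k) : (a - b2) - (a - b1) = b1 - b2.
Proof. by rewrite opprB addrC addrA subrK. Qed.

Lemma id1 (R : comRingType) k (w y0 y1 a b c : 'rV[R]_k) :
  w - y0 - (a - b) = (w - y1 - (a - c)) + (y1 - y0) + (b - c).
Proof. apply/rowP => j; rewrite !mxE; ring. Qed.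

Lemma id2 (R : comRingType) p k (w y0 y1 : 'rV[R]_k) (x y z : 'rV[R]_p) (A : 'M[R]_(p, k)) :
  w - y0 - (y - x) *m A = (w - y1 - (y - z) *m A) + (y1 - y0) + (x - z) *m A.
Proof. by rewrite !mulmxBl (id1 _ _ y1 _ _ (z *m A)). Qed.

Section Main.
Variables (R : realType) (n m : nat) (NX : 'rV[R]_n -> R) (NY : 'rV[R]_m -> R)
  (T : 'rV[R]_n -> set 'rV[R]_m).
Hypotheses (hX : is_norm NX) (hY : is_norm NY) (hT : forall u, T u !=set0)
  (hW : forall x, weakly_continuous_at NX NY T x).
Variables (CX cX CY cY : R).
Hypotheses (CX0 : 0 < CX) (cX0 : 0 < cX) (CY0 : 0 < CY) (cY0 : 0 < cY).
Hypotheses (hCX : forall x, NX x <= CX * `|x|) (hcX : forall x, cX * `|x| <= NX x)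
  (hCY : forall y, NY y <= CY * `|y|) (hcY : forall y, cY * `|y| <= NY y).

Definition K1 := CY * (n%:R + 1) / cX.
Definition K2 := CX / cY.

Lemma K1_gt0 : 0 < K1.
Proof. rewrite /K1 divr_gt0 // mulr_gt0 //; exact: ltr_pwDr. Qed.

Lemma K2_gt0 : 0 < K2.
Proof. exact: divr_gt0. Qed.

Lemma op_bound v (B : 'M[R]_(n, m)) : NY (v *m B) <= K1 * `|B| * NX v.
Proof.
apply: le_trans (hCY _) _.
have h1 := mulmx_norm v B.
have h2 : `|v| <= NX v / cX by rewrite ler_pdivlMr // mulrC.
have e1 : `|v *m B| <= (n%:R + 1) * `|B| * (NX v / cX).
  have ha := normr_ge0 v; have hb := normr_ge0 B; have hk : 0 <= n%:R :> R by [].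
  have kb : 0 <= (n%:R + 1) * `|B| by rewrite mulr_ge0 // addr_ge0.
  have ab : 0 <= `|v| * `|B| by rewrite mulr_ge0.
  nra.
apply: le_trans (ler_wpM2l (ltW CY0) e1) _.
rewrite le_eqVlt; apply/orP; left; apply/eqP; rewrite /K1; field.
by rewrite gt_eqF.
Qed.

Definition Pd x y0 (A : 'M[R]_(n, m)) e d := forall y, NX (x - y) < d ->
  forall w, T y w -> NY (w - y0 - (y - x) *m A) <= e * NX (y - x).

Lemma compare x y0 A1 A2 e1 e2 d1 d2 : 0 <= e1 -> 0 <= e2 -> 0 < d1 -> 0 < d2 ->
  Pd x y0 A1 e1 d1 -> Pd x y0 A2 e2 d2 -> `|A1 - A2| <= K2 * (e1 + e2).
Proof.
move=> e10 e20 d10 d20 H1 H2.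
apply: norm_le_entries; first by rewrite mulr_ge0 ?addr_ge0 // ltW // K2_gt0.
move=> i j.
pose u : 'rV[R]_n := delta_mx 0 i.
pose dd := Num.min d1 d2.
have dd0 : 0 < dd by rewrite lt_min d10 d20.
have u0 : 0 <= NX u := N_ge0 hX u.
pose t := dd / (2 * (NX u + 1)).
have t0 : 0 < t by rewrite /t divr_gt0 //; lra.
pose y := x + t *: u.
have hyx : y - x = t *: u by rewrite /y addrAC subrr add0r.
have hy : NX (x - y) = t * NX u by rewrite -opprB NN // hyx NZ // gtr0_norm.
have hlt : t * NX u < dd by apply: aux_lt.
have [w Tw] := hT y.
have hxy : NX (x - y) < dd by rewrite hy.
have hd1 : NX (x - y) < d1 by apply: lt_le_trans hxy _; rewrite ge_min lexx.
have hd2 : NX (x - y) < d2 by apply: lt_le_trans hxy _; rewrite ge_min lexx orbT.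
have h1 := H1 y hd1 w Tw; have h2 := H2 y hd2 w Tw.
pose r := row i (A1 - A2).
have eq : (y - x) *m (A1 - A2) = t *: r by rewrite hyx -scalemxAl /r rowE.
have key : NY ((y - x) *m (A1 - A2)) <= (e1 + e2) * NX (y - x).
  rewrite (_ : (y - x) *m (A1 - A2) = (w - y0 - (y - x) *m A2) - (w - y0 - (y - x) *m A1)).
    apply: le_trans (N_tri hY _ _) _; rewrite NN //; lra.
  by rewrite subsub mulmxBr.
rewrite eq NZ // gtr0_norm // hyx NZ // gtr0_norm // in key.
have key2 : NY r <= (e1 + e2) * NX u.
  by rewrite -(ler_pM2l t0) mulrCA.
have nu : `|u| <= 1.
  apply: norm_le_entries => // a b; rewrite /u mxE.
  by case: (_ && _); rewrite ?normr1 ?normr0.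
have nu2 : NX u <= CX by apply: le_trans (hCX u) _; rewrite -[leRHS]mulr1 ler_wpM2l // ltW.
have hr : `|(A1 - A2) i j| <= `|r|.
  rewrite (_ : (A1 - A2) i j = r 0 j); first exact: entry_le_norm.
  by rewrite /r !mxE.
have hr2 : cY * `|r| <= (e1 + e2) * CX.
  apply: le_trans (hcY r) _; apply: le_trans key2 _; apply: ler_wpM2l => //; exact: addr_ge0.
rewrite /K2; apply: le_trans hr _.
rewrite -(ler_pM2l cY0); apply: le_trans hr2 _.
rewrite le_eqVlt; apply/orP; left; apply/eqP; field; by rewrite gt_eqF.
Qed.

Definition Sg := [set x | exists y, T x = [set y]].
Definition Oe e := [set x | exists2 d, 0 < d & forall y1 y2 w1 w2,
  NX (y1 - x) < d -> NX (y2 - x) < d -> T y1 w1 -> T y2 w2 -> NY (w1 - w2) < e].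

Lemma NX_small x z d : `|x - z| < d / CX -> NX (z - x) < d.
Proof.
move=> hz; apply: le_lt_trans (hCX _) _; rewrite distrC.
by move: hz; rewrite ltr_pdivlMr // mulrC.
Qed.

Lemma NX_tri x y z : NX (y - x) <= NX (y - z) + NX (z - x).
Proof. by have := N_tri hX (y - z) (z - x); rewrite addrA subrK. Qed.

Lemma Oe_open e : open (Oe e).
Proof.
apply: open_norm => x [d d0 hd].
exists (d / 2 / CX); first by rewrite !divr_gt0.
move=> z hz; exists (d / 2); first by rewrite divr_gt0.
have hzx := NX_small hz.
move=> y1 y2 w1 w2 h1 h2; apply: hd.
  by apply: le_lt_trans (NX_tri x y1 z) _; lra.
by apply: le_lt_trans (NX_tri x y2 z) _; lra.
Qed.

Lemma S_sub_O k x : Sg x -> Oe (k.+1%:R^-1) x.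
Proof.
move=> [y0 hx]; set e := k.+1%:R^-1.
have e0 : 0 < e by rewrite invr_gt0 ltr0n.
have e20 : 0 < e / 2 by rewrite divr_gt0.
have [d d0 hd] := hW x e20.
exists d => // y1 y2 w1 w2 h1 h2 T1 T2.
have [t1 [v1 [Tt1 nv1 ->]]] := hd y1 h1 w1 T1.
have [t2 [v2 [Tt2 nv2 ->]]] := hd y2 h2 w2 T2.
rewrite hx in Tt1 Tt2; rewrite Tt1 Tt2.
rewrite opprD addrACA subrr add0r.
apply: le_lt_trans (N_tri hY _ _) _; rewrite NN //; lra.
Qed.

Lemma O_sub_S x : (forall k, Oe (k.+1%:R^-1) x) -> Sg x.
Proof.
move=> h; have [y0 Ty0] := hT x; exists y0.
apply/seteqP; split => w /=; last by move=> ->.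
move=> Tw.
have : NY (w - y0) <= 0.
  apply: le0_inv => k; have [d d0 hd] := h k; apply: (hd x x w y0) => //; by rewrite subrr N0.
move=> hle; have : NY (w - y0) = 0 by apply/le_anti; rewrite hle N_ge0.
by move/(N_eq0 hY)/subr0_eq.
Qed.

Lemma S_Borel : Borel Sg.
Proof.
rewrite (_ : Sg = \bigcap_k Oe k.+1%:R^-1).
  by apply: B_bigcap => k; apply: B_open; exact: Oe_open.
apply/seteqP; split => x.
  by move=> Sx k _; exact: S_sub_O.
by move=> h; apply: O_sub_S => k; exact: h.
Qed.


Definition Cs A e d := [set x | exists y0, T x = [set y0] /\ Pd x y0 A e d].

Lemma Cs_closed A e d x : 0 <= e -> Sg x -> closure (Cs A e d) x -> Cs A e d x.
Proof.
move=> e0 [y0 hx] hcl; exists y0; split => // y hy w Tw.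
apply/ler_addgt0Pr => eta eta0.
pose g := d - NX (x - y).
have g0 : 0 < g by rewrite /g subr_gt0.
have e3 : 0 < eta / 3 by rewrite divr_gt0.
have [dl dl0 hdl] := hW x e3.
have hA := normr_ge0 A; have K10 := K1_gt0.
have KA : 0 < K1 * `|A| + 1 by have := mulr_ge0 (ltW K10) hA; lra.
have eps1 : 0 < e + 1 by lra.
pose gam := Num.min (Num.min g dl) (Num.min (eta / 3 / (e + 1)) (eta / 3 / (K1 * `|A| + 1))).
have gam0 : 0 < gam by rewrite !lt_min g0 dl0 !divr_gt0.
have : nbhs x [set z | NX (z - x) < gam].
  apply: near_norm; exists (gam / CX); first exact: divr_gt0.
  by move=> z; exact: NX_small.
move=> /hcl [z [[y1 [hz Pz]] hzx]].
move: (hzx); rewrite /= !lt_min => /andP[/andP[h1 h2] /andP[h3 h4]].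
have Ty1 : T z y1 by rewrite hz.
have [t [v [Tt nv ey1]]] := hdl z h2 y1 Ty1.
rewrite hx in Tt.
have hzy : NX (z - y) < d.
  apply: le_lt_trans (NX_tri y z x) _; rewrite /g in h1; lra.
have hP := Pz y hzy w Tw.
rewrite (id2 w y0 y1 x y z A).
have hv : y1 - y0 = v by rewrite ey1 Tt addrC addKr.
rewrite hv.
have hN1 := N_tri hY (w - y1 - (y - z) *m A + v) ((x - z) *m A).
have hN2 := N_tri hY (w - y1 - (y - z) *m A) v.
have hop := op_bound (x - z) A.
rewrite NB // in hop.
have hyz : NX (y - z) <= NX (y - x) + NX (z - x) by rewrite [NX (z - x)]NB //; exact: NX_tri.
have hnz := N_ge0 hX (z - x).
have he : e * NX (y - z) <= e * NX (y - x) + e * NX (z - x).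
  by rewrite -mulrDr; apply: ler_wpM2l.
have h3' : NX (z - x) * (e + 1) < eta / 3 by rewrite -ltr_pdivlMr.
have h4' : NX (z - x) * (K1 * `|A| + 1) < eta / 3 by rewrite -ltr_pdivlMr.
have hKA : 0 <= K1 * `|A| by rewrite mulr_ge0 // ltW.
nra.
Qed.

Lemma Cs_Borel A e d : 0 <= e -> Borel (Cs A e d).
Proof.
move=> e0.
rewrite (_ : Cs A e d = Sg `&` closure (Cs A e d)).
  by apply: B_I; [exact: S_Borel | apply: B_closed; exact: closed_closure].
apply/seteqP; split => x.
  move=> Cx; split; last exact: subset_closure.
  by case: Cx => y0 [hx _]; exists y0.
by move=> [Sx clx]; exact: Cs_closed.
Qed.


Lemma sd_Pd x A0 e : strong_derivative_at NX NY T x A0 -> 0 < e ->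
  exists y0, T x = [set y0] /\ exists2 d, 0 < d & Pd x y0 A0 e d.
Proof.
move=> [y0 [hx h]] e0; exists y0; split => //.
have [d d0 hd] := h e e0; exists d => // y hy w Tw.
by apply: hd => //; exact: ltW.
Qed.

Lemma approx_C x A0 A e : strong_derivative_at NX NY T x A0 -> 0 < e ->
  K1 * `|A0 - A| <= e / 2 -> exists j : nat, Cs A e (j.+1%:R^-1) x.
Proof.
move=> sd e0 hA.
have e20 : 0 < e / 2 by rewrite divr_gt0.
have [y0 [hx [d d0 hd]]] := sd_Pd sd e20.
have [j hj] := small_inv d0.
exists j, y0; split => // y hy w Tw.
have hy' : NX (x - y) < d by apply: lt_trans hy hj.
have h1 := hd y hy' w Tw.
rewrite (_ : w - y0 - (y - x) *m A = (w - y0 - (y - x) *m A0) + (y - x) *m (A0 - A)); last first.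
  by rewrite mulmxBr addrA subrK.
apply: le_trans (N_tri hY _ _) _.
have h2 := op_bound (y - x) (A0 - A).
have hn := N_ge0 hX (y - x).
have h3 : K1 * `|A0 - A| * NX (y - x) <= e / 2 * NX (y - x) by apply: ler_wpM2r.
lra.
Qed.

Lemma inv_mono (k l : nat) : (k <= l)%N -> l.+1%:R^-1 <= k.+1%:R^-1 :> R.
Proof. by move=> hkl; rewrite lef_pV2 ?posrE ?ltr0n // ler_nat ltnS. Qed.


Lemma Cs_to_sd x (A : nat -> 'M[R]_(n, m)) (D : nat -> R) : (forall k, 0 < D k) ->
  (forall k, Cs (A k) (k.+1%:R^-1) (D k) x) -> exists A0, strong_derivative_at NX NY T x A0.
Proof.
move=> D0 hC.
have [y0 [hx _]] := hC 0%N.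
have hP : forall k, Pd x y0 (A k) (k.+1%:R^-1) (D k).
  move=> k; have [y1 [hx1 P1]] := hC k.
  have e : y1 = y0 by have : [set y0] y1 by rewrite -hx hx1.
  by rewrite -e.
have ge0 (k : nat) : 0 <= k.+1%:R^-1 :> R by rewrite invr_ge0 ler0n.
have hcmp k l : `|A k - A l| <= K2 * (k.+1%:R^-1 + l.+1%:R^-1).
  exact: compare (ge0 k) (ge0 l) (D0 k) (D0 l) (hP k) (hP l).
have K20 := K2_gt0; have K10 := K1_gt0.
have cv : cvg (A @ \oo).
  apply/cauchy_cvgP; apply: cauchy_exP => eps eps0.
  have h2K : 0 < eps / (2 * K2) by rewrite divr_gt0 // mulr_gt0.
  have [k hk] := small_inv h2K.
  exists (A k); exists k => // l /= hkl.
  rewrite -ball_normE /=.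
  apply: le_lt_trans (hcmp k l) _; have := inv_mono hkl.
  move: hk; rewrite ltr_pdivlMr; last by rewrite mulr_gt0.
  move=> hk hkl'.
  have := ler_wpM2l (ltW K20) hkl'.
  move: hk hkl'; set a := k.+1%:R^-1; set b := l.+1%:R^-1 => hk hkl' h; nra.
set A0 := lim (A @ \oo).
have hA0 : A @ \oo --> A0 := cv.
exists A0, y0; split => // e e0.
pose Kc := 1 + K1 * (2 * K2 + 1).
have Kc0 : 0 < Kc by rewrite /Kc; have := mulr_gt0 K10 (_ : 0 < 2 * K2 + 1); lra.
have [k hk] := small_inv (divr_gt0 e0 Kc0).
have ek0 : 0 < k.+1%:R^-1 :> R by rewrite invr_gt0 ltr0n.
have [N _ hN] := (cvgrPdist_lt _ _).1 hA0 _ ek0.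
pose l := maxn N k.
have hl : `|A0 - A l| < k.+1%:R^-1 by apply: hN; rewrite /= leq_maxl.
have hkl : (k <= l)%N by rewrite leq_maxr.
exists (D k / 2); first by rewrite divr_gt0.
move=> y hy w Tw.
have hy' : NX (x - y) < D k by have := D0 k; lra.
have h1 := hP k y hy' w Tw.
rewrite (_ : w - y0 - (y - x) *m A0 = (w - y0 - (y - x) *m A k) + (y - x) *m (A k - A0)); last first.
  by rewrite mulmxBr addrA subrK.
apply: le_trans (N_tri hY _ _) _.
have h2 := op_bound (y - x) (A k - A0).
have hn := N_ge0 hX (y - x).
have hB : `|A k - A0| <= (2 * K2 + 1) * k.+1%:R^-1.
  have := ler_distD (A l) (A k) A0; rewrite distrC in hl.
  have := hcmp k l; have := inv_mono hkl.
  move: hl; set a := k.+1%:R^-1; set b := l.+1%:R^-1 => hl hab hc ht.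
  have := ler_wpM2l (ltW K20) hab; nra.
have h3 : K1 * `|A k - A0| * NX (y - x) <= K1 * ((2 * K2 + 1) * k.+1%:R^-1) * NX (y - x).
  by apply: ler_wpM2r => //; apply: ler_wpM2l => //; exact: ltW.
move: hk; rewrite ltr_pdivlMr // => hk.
have h4 : k.+1%:R^-1 * Kc * NX (y - x) <= e * NX (y - x) by apply: ler_wpM2r => //; exact: ltW.
move: h1 h3 h4 hk; rewrite /Kc; set a := k.+1%:R^-1 => h1 h3 h4 hk.
nra.
Qed.

Definition Dset := \bigcap_k \bigcup_j \bigcup_(Q : 'M[rat]_(n, m))
  Cs (map_mx ratr Q) (k.+1%:R^-1) (j.+1%:R^-1).

Lemma ek_gt0 (k : nat) : 0 < k.+1%:R^-1 :> R.
Proof. by rewrite invr_gt0 ltr0n. Qed.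

Lemma sd_approx x A0 k : strong_derivative_at NX NY T x A0 ->
  exists j : nat, exists Q : 'M[rat]_(n, m),
    `|A0 - map_mx ratr Q| < k.+1%:R^-1 / 2 / K1 /\ Cs (map_mx ratr Q) (k.+1%:R^-1) (j.+1%:R^-1) x.
Proof.
move=> sd.
have K10 := K1_gt0; have ek := ek_gt0 k.
have [Q hQ] := mx_approx A0 (divr_gt0 (divr_gt0 ek (ltr0n _ 2)) K10).
have hQ' : K1 * `|A0 - map_mx ratr Q| <= k.+1%:R^-1 / 2.
  by apply: ltW; rewrite mulrC -ltr_pdivlMr.
have [j hj] := approx_C sd ek hQ'.
by exists j, Q.
Qed.

Lemma D_eq : dmnD NX NY T = Dset.
Proof.
apply/seteqP; split => x.
  move=> [A0 sd] k _.
  have [j [Q [_ hC]]] := sd_approx k sd.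
  by exists j => //; exists Q.
move=> h.
have h' : forall k, exists jQ : nat * 'M[rat]_(n, m),
    Cs (map_mx ratr jQ.2) (k.+1%:R^-1) (jQ.1.+1%:R^-1) x.
  move=> k; have [j _ [Q _ hC]] := h k I.
  by exists (j, Q).
have [g hg] := choice h'.
have := @Cs_to_sd x (fun k => map_mx ratr (g k).2) (fun k => (g k).1.+1%:R^-1).
by apply => // k; exact: ek_gt0.
Qed.

Lemma D_Borel : Borel (dmnD NX NY T).
Proof.
rewrite D_eq; apply: B_bigcap => k; apply: B_bigcup => j; apply: B_countable => Q.
by apply: Cs_Borel; exact: ltW (ek_gt0 k).
Qed.

Lemma DT_sd x : dmnD NX NY T x -> strong_derivative_at NX NY T x (DT NX NY T x).
Proof. by move=> hx; rewrite /DT; apply: xgetPex. Qed.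

Lemma DT_near x A e d : dmnD NX NY T x -> 0 < e -> 0 < d -> Cs A e d x ->
  `|DT NX NY T x - A| <= K2 * (e + e).
Proof.
move=> Dx e0 d0 [y0 [hx hP]].
have [y1 [hx1 [d' d'0 hP']]] := sd_Pd (DT_sd Dx) e0.
have ey : y1 = y0 by have : [set y0] y1 by rewrite -hx hx1.
rewrite ey in hP'.
exact: compare (ltW e0) (ltW e0) d'0 d0 hP' hP.
Qed.

Lemma open_pre U : open U -> Borel (dmnD NX NY T `&` DT NX NY T @^-1` U).
Proof.
move=> oU.
have K20 := K2_gt0; have K10 := K1_gt0.
rewrite (_ : dmnD NX NY T `&` DT NX NY T @^-1` U = dmnD NX NY T `&`
  \bigcup_k \bigcup_j \bigcup_(Q : 'M[rat]_(n, m))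
    (if pselect (forall Z, `|map_mx ratr Q - Z| < 3 * K2 * k.+1%:R^-1 -> U Z)
     then Cs (map_mx ratr Q) (k.+1%:R^-1) (j.+1%:R^-1) else set0)).
  apply: B_I; first exact: D_Borel.
  apply: B_bigcup => k; apply: B_bigcup => j; apply: B_countable => Q.
  case: pselect => hc; last exact: B_set0.
  by apply: Cs_Borel; exact: ltW (ek_gt0 k).
apply/seteqP; split => x.
  move=> [Dx Ux]; split => //.
  have : nbhs (DT NX NY T x) U by rewrite openE in oU; exact: oU.
  move/nbhs_normP => [r r0 hr].
  have hm : 0 < Num.min (r / 2 / (3 * K2)) (r * K1).
    by rewrite lt_min; apply/andP; split; [rewrite !divr_gt0 // mulr_gt0 | rewrite mulr_gt0].
  have [k hk] := small_inv hm.
  move: hk; rewrite lt_min => /andP[hk1 hk2].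
  have [j [Q [hQ hC]]] := sd_approx k (DT_sd Dx).
  exists k => //; exists j => //; exists Q => //.
  case: pselect => [//|nc]; exfalso; apply: nc => Z hZ; apply: hr => /=.
  apply: le_lt_trans (ler_distD (map_mx ratr Q) _ Z) _.
  have h1 : k.+1%:R^-1 / 2 / K1 < r / 2.
    have : k.+1%:R^-1 / K1 < r by rewrite ltr_pdivrMr.
    rewrite mulrAC; set t := k.+1%:R^-1 / K1; lra.
  have h2 : 3 * K2 * k.+1%:R^-1 < r / 2.
    move: hk1; rewrite ltr_pdivlMr; last by rewrite mulr_gt0.
    by rewrite mulrC.
  move: hQ hZ h1 h2; set a := k.+1%:R^-1 => hQ hZ h1 h2.
  set b := a / 2 / K1 in hQ h1.
  lra.
move=> [Dx [k _ [j _ [Q _]]]].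
case: pselect => [hc hC|_ //]; split => //.
rewrite /preimage /=; apply hc; rewrite distrC.
apply: le_lt_trans (DT_near Dx (ek_gt0 k) (ek_gt0 j) hC) _.
have := ek_gt0 k; set a := k.+1%:R^-1 => ha; nra.
Qed.

Lemma DT_Borel : Borel_fun_on (dmnD NX NY T) (DT NX NY T).
Proof.
move=> B hB.
pose G := [set B : set 'M[R]_(n, m) | Borel (dmnD NX NY T `&` DT NX NY T @^-1` B)].
suff : <<s open >> `<=` G by apply.
apply: smallest_sub; last by move=> U oU; exact: open_pre.
split.
- by rewrite /G /= preimage_set0 setI0; exact: B_set0.
- move=> A hA; rewrite /G /=.
  rewrite (_ : dmnD NX NY T `&` DT NX NY T @^-1` (setT `\` A) =
     dmnD NX NY T `&` ~` (dmnD NX NY T `&` DT NX NY T @^-1` A)).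
    by apply: B_I; [exact: D_Borel | exact: B_C].
  apply/seteqP; split => x /=.
    by move=> [Dx [_ nA]]; split => // -[_ ?].
  by move=> [Dx h]; split => //; split => // hA'; apply: h.
- move=> F hF; rewrite /G /= preimage_bigcup setI_bigcupr; apply: B_bigcup => k.
  exact: hF.
Qed.

End Main.

Unset Implicit Arguments.

Theorem lemma2p1 (R : realType) (n m : nat)
  (NX : 'rV[R]_n -> R) (NY : 'rV[R]_m -> R) (T : 'rV[R]_n -> set 'rV[R]_m) :
  is_norm NX -> is_norm NY ->
  (forall u, T u !=set0) ->
  (forall x, weakly_continuous_at NX NY T x) ->
  [/\ Borel [set x | exists y, T x = [set y]],
      Borel (dmnD NX NY T)
    & Borel_fun_on (dmnD NX NY T) (DT NX NY T)].
Proof.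
move=> hX hY hT hW.
have [CX CX0 hCX] := N_upper hX; have [cX cX0 hcX] := N_lower hX.
have [CY CY0 hCY] := N_upper hY; have [cY cY0 hcY] := N_lower hY.
split.
- exact: (S_Borel hX hY hT hW CX0 hCX).
- exact: (D_Borel hX hY hT hW CX0 cX0 CY0 cY0 hCX hcX hCY hcY).
- exact: (DT_Borel hX hY hT hW CX0 cX0 CY0 cY0 hCX hcX hCY hcY).
Qed.
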